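(* Let $g$ be a connected graph, let $\varphi$ be a set of pairwise non-crossing minimal separators of $g$, and let $S\in\varphi$ be a clique of $g$. Let $c_1,\dots,c_k$ be the connected components of $g\setminus S$ and let $\mathcal{C}(S)=\{g_{|V(c_i)\cup N_g(V(c_i))}: 1\le i\le k\}$. Then: (1) neither $S$ nor any subset of $S$ is a minimal separator of any graph in $\mathcal{C}(S)$; (2) for every $S'\in\varphi\setminus\{S\}$ there exists $c\in\mathcal{C}(S)$ with $S'\subseteq V(c)$.
   Context: Graphs are finite, simple and undirected. $g_{|U}$ is the subgraph induced by $U$, $g\setminus S=g_{|V(g)\setminus S}$, and $N_g(U)=\bigcup_{v\in U}N_g(v)\setminus U$. For nodes $u,v$, a set $S\subseteq V(g)$ is a $(u,v)$-separator if $u,v$ lie in distinct connected components of $g\setminus S$; it is a minimal $(u,v)$-separator if no proper subset is one; $S$ is a minimal separator if it is a minimal $(u,v)$-separator for some $u,v$. Two minimal separators $S,T$ cross if there are $u,v\in T$ such that $S$ is a $(u,v)$-separator. *)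

(* Defs.v *)
(* A graph g is given by a vertex set V : {set T} inside a
   finType T together with a symmetric irreflexive edge relation e : rel T.
   Induced subgraph g_|U is then (U, e) for U \subset V. *)
From mathcomp Require Import all_boot.
Set Implicit Arguments. Unset Strict Implicit. Unset Printing Implicit Defensive.

Section Graphs.
Variable T : finType.
Variable e : rel T.

Definition restr (U : {set T}) : rel T := fun x y => [&& x \in U, y \in U & e x y].

Definition conn (U : {set T}) (x y : T) : bool := connect (restr U) x y.

Definition connected_graph (V : {set T}) : Prop :=
  forall x y, x \in V -> y \in V -> conn V x y.

Definition is_clique (S : {set T}) : Prop :=
  forall x y, x \in S -> y \in S -> x != y -> e x y.

Definition nbhd (V U : {set T}) : {set T} :=
  [set y in V | (y \notin U) && [exists x in U, e x y]].

Definition separator (V S : {set T}) (u v : T) : Prop :=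
  [/\ S \subset V, u \in V :\: S, v \in V :\: S & ~~ conn (V :\: S) u v].

Definition min_separator_uv (V S : {set T}) (u v : T) : Prop :=
  separator V S u v /\ forall S' : {set T}, S' \proper S -> ~ separator V S' u v.

Definition min_separator (V S : {set T}) : Prop :=
  exists u v, min_separator_uv V S u v.

Definition cross (V S S' : {set T}) : Prop :=
  exists u v, [/\ u \in S', v \in S' & separator V S u v].

Definition component (V S C : {set T}) : Prop :=
  exists2 x, x \in V :\: S & C = [set y in V :\: S | conn (V :\: S) x y].

End Graphs.

(* Main.v *)
Require Import Defs.
From mathcomp Require Import all_boot.
Set Implicit Arguments. Unset Strict Implicit. Unset Printing Implicit Defensive.

Section L.
Variables (T : finType) (e : rel T).
Hypothesis esym : symmetric e.

Definition comp (V S : {set T}) x := [set z in V :\: S | conn e (V :\: S) x z].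

Lemma conn_closed (U : {set T}) (A : {set T}) x y :
  (forall a b, a \in A -> restr e U a b -> b \in A) -> x \in A -> conn e U x y -> y \in A.
Proof.
move=> HA xA /connectP [p pth ->].
elim: p x xA pth => [|z p IH] x xA /=; first done.
case/andP=> h1 h2. apply: IH h2. exact: HA h1.
Qed.

Lemma restr_sym (U : {set T}) : symmetric (restr e U).
Proof.
move=> x y; apply/idP/idP; case/and3P=> h1 h2 h3; apply/and3P; split=> //; by rewrite esym.
Qed.

Lemma conn_sym (U : {set T}) x y : conn e U x y = conn e U y x.
Proof. by rewrite /conn (sym_connect_sym (@restr_sym U)). Qed.

Lemma conn_edge (U : {set T}) x y : x \in U -> y \in U -> e x y -> conn e U x y.
Proof. by move=> *; apply: connect1; apply/and3P. Qed.

Lemma conn_mono (U W : {set T}) x y : U \subset W -> conn e U x y -> conn e W x y.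
Proof.
move=> sUW h.
have: y \in [set z | conn e W x z].
  apply: (conn_closed _ _ h).
  - move=> a b; rewrite !inE => hxa /and3P[aU bU eab].
    apply: connect_trans hxa _; apply: conn_edge => //; exact: (subsetP sUW).
  - by rewrite inE; exact: connect0.
by rewrite inE.
Qed.

Lemma conn_comp V S x y : x \in V :\: S -> y \in comp V S x -> conn e (comp V S x) x y.
Proof.
move=> xVS yC.
have: y \in [set z | (z \in comp V S x) && conn e (comp V S x) x z].
  move: yC; rewrite /comp inE => /andP[_ hxy].
  apply: (conn_closed _ _ hxy).
  - move=> a b; rewrite inE => /andP[aC hxa] /and3P[aU bU eab].
    have bC : b \in comp V S x.
      move: (aC); rewrite /comp inE => /andP[_ hxa'].
      rewrite /comp inE bU /=; apply: connect_trans hxa' (conn_edge aU bU eab).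
    rewrite inE bC /=; exact: connect_trans hxa (conn_edge aC bC eab).
  - rewrite inE; apply/andP; split; [rewrite /comp inE xVS /=|]; exact: connect0.
by rewrite inE => /andP[].
Qed.

Lemma full V S a b s : min_separator_uv e V S a b -> s \in S ->
  exists2 y, y \in comp V S a & e y s.
Proof.
case=> [[sSV aVS bVS nab] hmin] sS.
case: (boolP [exists y in comp V S a, e y s]) => [/existsP[y /andP[yC eys]]|hn].
  by exists y.
exfalso; apply: (hmin (S :\ s)); first exact: properD1 sS.
split.
- apply: subset_trans sSV; exact: subsetDl.
- by move: aVS; rewrite !inE => /andP[/negbTE -> ->]; rewrite andbF.
- by move: bVS; rewrite !inE => /andP[/negbTE -> ->]; rewrite andbF.
- apply/negP => hab.
  have: b \in comp V S a.
    apply: (conn_closed _ _ hab).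
    + move=> x y; rewrite inE => /andP[xVS hax] /and3P[_ yU exy].
      case: (eqVneq y s) => [ys|ys].
        subst y; exfalso; apply: (negP hn); apply/existsP; exists x.
        by rewrite inE xVS hax exy.
      have yVS : y \in V :\: S.
        by move: yU; rewrite !inE ys /= => /andP[-> ->].
      rewrite inE yVS /=; exact: connect_trans hax (conn_edge xVS yVS exy).
    + by rewrite inE aVS; exact: connect0.
  by rewrite inE => /andP[_]; apply/negP.
Qed.

Lemma msep_sym V S a b : min_separator_uv e V S a b -> min_separator_uv e V S b a.
Proof.
case=> [[sV aV bV nab] hm]; split.
  by split => //; rewrite conn_sym.
move=> S' pS' [s1 s2 s3 s4]; apply: (hm S' pS'); split => //; by rewrite conn_sym.
Qed.

Lemma helperH (V S S' : {set T}) (a w z : T) : a \in V :\: S' ->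
  (forall y, y \in comp V S' a -> y \notin S) ->
  (forall t, t \in S' -> exists2 y, y \in comp V S' a & e y t) ->
  w \in V :\: S -> w \in S' -> z \in S' -> exists2 y, y \in comp V S w & e y z.
Proof.
move=> aVS dis fl wVS wS' zS'.
have [y1 y1D ey1z] := fl z zS'.
have [y2 y2D ey2w] := fl w wS'.
have DsubVS : comp V S' a \subset V :\: S.
  apply/subsetP => y yD; rewrite inE (dis y yD) /=.
  by move: yD; rewrite !inE => /andP[/andP[_ ->]].
exists y1 => //.
rewrite /comp inE (subsetP DsubVS y1 y1D) /=.
have ew : e w y2 by rewrite esym.
apply: connect_trans (conn_edge wVS (subsetP DsubVS y2 y2D) ew) _.
apply: connect_trans (conn_mono DsubVS _) (conn_mono DsubVS (conn_comp aVS y1D)).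
by rewrite conn_sym; exact: conn_comp.
Qed.

End L.

Theorem lemma6 (T : finType) (e : rel T) (V : {set T}) :
  symmetric e -> irreflexive e ->
  connected_graph e V ->
  forall phi : {set {set T}},
    (forall S, S \in phi -> min_separator e V S) ->
    (forall S S', S \in phi -> S' \in phi -> S != S' -> ~ cross e V S S') ->
  forall S, S \in phi -> is_clique e S ->
    (forall C, component e V S C ->
       forall S' : {set T}, S' \subset S -> ~ min_separator e (C :|: nbhd e V C) S') /\
    (forall S', S' \in phi -> S' != S ->
       exists C, component e V S C /\ S' \subset C :|: nbhd e V C).
Proof.
move=> esym eirr Vconn phi hphi hnc S Sphi Scl; split.
- move=> C [x xVS ->] S' sS' [u [v [[sU uU vU nuv] _]]].
  change [set y in V :\: S | conn e (V :\: S) x y] with (comp e V S x).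
  set Cx := comp e V S x.
  set U := Cx :|: nbhd e V Cx.
  have CsubU : Cx \subset U :\: S'.
    apply/subsetP => z zC; rewrite /U in_setD in_setU zC /= andbT.
    move: zC; rewrite /Cx /comp !inE => /andP[/andP[zS _] _].
    apply: contra zS; exact: (subsetP sS').
  have claim : forall w, w \in U :\: S' -> conn e (U :\: S') x w.
    move=> w wU; move: (wU); rewrite /U in_setD in_setU => /andP[_ /orP[wC|wN]].
      exact: (conn_mono CsubU (conn_comp xVS wC)).
    move: wN; rewrite /nbhd inE => /andP[wV /andP[wnC /existsP[z /andP[zC ezw]]]].
    apply: connect_trans (conn_mono CsubU (conn_comp xVS zC))
      (conn_edge (subsetP CsubU z zC) wU ezw).
  apply: (negP nuv); apply: connect_trans (claim v vU).
  by move: (claim u uU); rewrite conn_sym.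
- move=> S' S'phi nSS'.
  have [u0 [v0 mS]] := hphi S Sphi.
  have [a [b mS']] := hphi S' S'phi.
  have sS'V : S' \subset V by case: mS' => [[]].
  have sSV : S \subset V by case: mS => [[]].
  case: (boolP [exists w in S', w \notin S]) => [/existsP[w /andP[wS' wnS]] | hno].
  + exists (comp e V S w).
    have wVS : w \in V :\: S by rewrite inE wnS (subsetP sS'V).
    split; first by exists w.
    apply/subsetP => z zS'; rewrite inE.
    have zV := subsetP sS'V z zS'.
    case: (boolP (z \in S)) => zS.
    * apply/orP; right.
      have [y yC eyz] : exists2 y, y \in comp e V S w & e y z.
        case: (boolP [exists p in comp e V S' a, p \in S]) => [/existsP[p /andP[pD pS]]|hpa].
          case: (boolP [exists q in comp e V S' b, q \in S]) => [/existsP[q /andP[qD qS]]|hqb].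
            exfalso; case: mS' => [[_ aV bV nab] _]; apply: (negP nab).
            move: pD qD; rewrite !inE => /andP[pV hap] /andP[qV hbq].
            apply: connect_trans hap _; apply: connect_trans _ (_ : conn e _ q b).
              case: (eqVneq p q) => [->|pq]; first exact: connect0.
              apply: conn_edge; rewrite ?inE //. exact: Scl.
            by rewrite conn_sym.
          apply: (helperH esym (a := b) _ _ _ wVS wS' zS').
          - by case: mS' => [[]].
          - by move=> y yD; move/existsPn: hqb => /(_ y); rewrite yD.
          - by move=> t tS'; apply: full (msep_sym esym mS') tS'.
        apply: (helperH esym (a := a) _ _ _ wVS wS' zS').
        - by case: mS' => [[]].
        - by move=> y yD; move/existsPn: hpa => /(_ y); rewrite yD.
        - by move=> t tS'; apply: full mS' tS'.
      rewrite /nbhd inE zV /=; apply/andP; split; first by rewrite inE inE zS.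
      by apply/existsP; exists y; rewrite yC.
    * apply/orP; left.
      have zVS : z \in V :\: S by rewrite inE zS zV.
      rewrite inE zVS /=; apply/negPn/negP => nwz.
      apply: (hnc S S' Sphi S'phi); first by rewrite eq_sym.
      by exists w, z; split.
  + exists (comp e V S u0).
    have u0VS : u0 \in V :\: S by case: mS => [[]].
    split; first by exists u0.
    apply/subsetP => z zS'.
    have zS : z \in S by move/existsPn: hno => /(_ z); rewrite zS' /= negbK.
    have [y yC eyz] := full mS zS.
    rewrite inE; apply/orP; right; rewrite /nbhd inE (subsetP sS'V z zS') /=.
    apply/andP; split; first by rewrite inE inE zS.
    by apply/existsP; exists y; rewrite yC.
Qed.
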